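(* Let $G$ be a circle of circumference $1$, let $\mathbf{x}\in G^n$ be such that the agents are not on one semicircle, and let $i\in N$, $x_i'\in G$ be such that the agents in $\mathbf{x}'=(x_i',\mathbf{x}_{-i})$ are on one semicircle. Then $\mathrm{cost}(\mathrm{rc}(\mathbf{x}),x_i)\le\mathrm{cost}(\mathrm{lrm}(\mathbf{x}'),x_i)$.
   Context: $d(x,y)$ is the shorter-arc length; $\hat x$ the antipode of $x$; $\mathrm{cost}(P,x_i)=\mathbb{E}_{y\sim P}[d(x_i,y)]$. Agents are on one semicircle if all locations lie in some closed arc of length $1/2$. LRM: for a profile on one semicircle, fix a closed arc of minimal length containing all locations, with endpoints $l,r$; $\mathrm{lrm}$ returns $l$ w.p. $1/4$, $r$ w.p. $1/4$, and the midpoint of that arc w.p. $1/2$. RC: the antipodal points $\hat{x}_1,\dots,\hat{x}_n$ partition $G$ into arcs between cyclically consecutive antipodal points; $\mathrm{rc}$ returns the midpoint of each such arc with probability equal to its length. *)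

(* Defs.v *)
From Stdlib Require Export Reals Lra List Sorting.Sorted Sorting.Permutation.
Export ListNotations.
Open Scope R_scope.

(* The circle G of circumference 1 is R/Z: a point is represented by any
   real number, two reals denoting the same point iff they differ by an
   integer.  frac_part r = r - floor r lies in [0,1). *)

Definition cdist (x y : R) : R := Rmin (frac_part (x - y)) (frac_part (y - x)).

Definition antipode (x : R) : R := frac_part (x + 1/2).

(* Closed arc starting at l going counterclockwise (increasing direction)
   of length L (0 <= L <= 1). *)
Definition in_arc (l L p : R) : Prop := frac_part (p - l) <= L.

Definition on_one_semicircle (xs : list R) : Prop :=
  exists l, Forall (in_arc l (1/2)) xs.

Definition is_min_arc (xs : list R) (l L : R) : Prop :=
  0 <= L /\ Forall (in_arc l L) xs /\
  (forall l' L', 0 <= L' -> Forall (in_arc l' L') xs -> L <= L').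

(* cost(lrm(x), y) for the chosen minimal arc [l, l+L]:
   l w.p. 1/4, r = l+L w.p. 1/4, midpoint l+L/2 w.p. 1/2. *)
Definition lrm_cost (l L y : R) : R :=
  1/4 * cdist l y + 1/4 * cdist (l + L) y + 1/2 * cdist (l + L / 2) y.

Fixpoint rc_chain (a : R) (rest : list R) (first y : R) : R :=
  match rest with
  | nil => (first + 1 - a) * cdist ((a + (first + 1)) / 2) y
  | b :: t => (b - a) * cdist ((a + b) / 2) y + rc_chain b t first y
  end.

(* cost(rc(x), y), where s is the sorted list of antipodal points. *)
Definition rc_cost_sorted (s : list R) (y : R) : R :=
  match s with
  | nil => 0
  | a :: t => rc_chain a t a y
  end.

Definition sorted_antipodes (xs s : list R) : Prop :=
  Sorted Rle s /\ Permutation s (map antipode xs).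

Definition upd (xs : list R) (i : nat) (v : R) : list R :=
  firstn i xs ++ v :: skipn (S i) xs.

(* Main.v *)
Require Import Defs.
From Stdlib Require Import Reals List.
From Stdlib Require Import Lia ZArith.
Open Scope R_scope.

Lemma frac_eq (r f : R) (k : Z) : 0 <= f < 1 -> r - f = IZR k -> frac_part r = f.
Proof.
  intros [H0 H1] Hk.
  assert (E : (k + 1)%Z = up r).
  { apply tech_up; rewrite plus_IZR; lra. }
  unfold frac_part, Int_part. rewrite <- E.
  replace (k + 1 - 1)%Z with k by ring. lra.
Qed.

Lemma frac_dec (r : R) : 0 <= frac_part r < 1 /\ r - frac_part r = IZR (Int_part r).
Proof.
  destruct (base_fp r). split. lra. unfold frac_part. ring.
Qed.

Lemma cdist_val (a b c : R) (k : Z) :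
  a - b = c + IZR k -> -1/2 <= c <= 1/2 -> cdist a b = Rabs c.
Proof.
  intros H Hc. unfold cdist.
  destruct (Rlt_le_dec 0 c) as [Hp|Hn].
  - rewrite (frac_eq (a - b) c k) by lra.
    rewrite (frac_eq (b - a) (1 - c) (- k - 1)) by (try rewrite minus_IZR, opp_IZR; lra).
    rewrite Rabs_right by lra. unfold Rmin; destruct Rle_dec; lra.
  - destruct (Req_dec c 0) as [Hz|Hz].
    + subst c. rewrite (frac_eq (a - b) 0 k) by lra.
      rewrite (frac_eq (b - a) 0 (- k)) by (try rewrite opp_IZR; lra).
      rewrite Rabs_R0. unfold Rmin; destruct Rle_dec; lra.
    + rewrite (frac_eq (a - b) (c + 1) (k - 1)) by (try rewrite minus_IZR; lra).
      rewrite (frac_eq (b - a) (- c) (- k)) by (try rewrite opp_IZR; lra).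
      rewrite Rabs_left by lra. unfold Rmin; destruct Rle_dec; lra.
Qed.

Lemma hh (al be : R) : al <= be ->
  (be - al) * Rabs ((al + be) / 2) <= (be * Rabs be - al * Rabs al) / 2.
Proof.
  intros H.
  destruct (Rle_dec 0 al); destruct (Rle_dec 0 be);
  destruct (Rle_dec 0 ((al+be)/2));
  repeat first [rewrite (Rabs_right al) by lra | rewrite (Rabs_left al) by lra
               | rewrite (Rabs_right be) by lra | rewrite (Rabs_left be) by lra
               | rewrite (Rabs_right ((al+be)/2)) by lra | rewrite (Rabs_left ((al+be)/2)) by lra];
  nra.
Qed.

Definition Phi (c z : R) : R := (z - c) * Rabs (z - c) / 2.
Definition Psi (p z : R) : R :=
  if Rle_dec z p then Phi (p - 1/2) z else Phi (p + 1/2) z + 1/4.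

Lemma Psi_lo p z : z <= p -> Psi p z = Phi (p - 1/2) z.
Proof. intros; unfold Psi; destruct Rle_dec; lra. Qed.

Lemma Psi_hi p z : p <= z -> Psi p z = Phi (p + 1/2) z + 1/4.
Proof.
  intros H; unfold Psi; destruct Rle_dec; try lra.
  assert (z = p) by lra. subst z. unfold Phi.
  replace (p - (p - 1/2)) with (1/2) by lra.
  replace (p - (p + 1/2)) with (-(1/2)) by lra.
  rewrite Rabs_Ropp, Rabs_right by lra. lra.
Qed.

Lemma arc_bound (p y a b : R) (k : Z) :
  y = p - 1/2 + IZR k -> a <= b ->
  ((p - 1 <= a /\ b <= p) \/ (p <= a /\ b <= p + 1)) ->
  (b - a) * cdist ((a + b) / 2) y <= Psi p b - Psi p a.
Proof.
  intros Hy Hab [[H1 H2]|[H1 H2]].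
  - rewrite (cdist_val _ _ ((a+b)/2 - (p - 1/2)) (- k)) by (try rewrite opp_IZR; lra).
    rewrite !Psi_lo by lra. unfold Phi.
    pose proof (hh (a - (p - 1/2)) (b - (p - 1/2)) ltac:(lra)).
    replace ((a + b) / 2 - (p - 1 / 2)) with ((a - (p - 1/2) + (b - (p - 1/2)))/2) by lra.
    lra.
  - rewrite (cdist_val _ _ ((a+b)/2 - (p + 1/2)) (1 - k)) by (try rewrite minus_IZR; lra).
    rewrite !Psi_hi by lra. unfold Phi.
    pose proof (hh (a - (p + 1/2)) (b - (p + 1/2)) ltac:(lra)).
    replace ((a + b) / 2 - (p + 1 / 2)) with ((a - (p + 1/2) + (b - (p + 1/2)))/2) by lra.
    lra.
Qed.

Lemma chain_bound (p y first : R) (k : Z) :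
  y = p - 1/2 + IZR k -> 0 <= p < 1 -> 0 <= first <= p ->
  forall rest a,
  StronglySorted Rle (a :: rest) ->
  Forall (fun z => 0 <= z < 1) (a :: rest) ->
  (In p (a :: rest) \/ p <= a) ->
  rc_chain a rest first y <= Psi p (first + 1) - Psi p a.
Proof.
  intros Hy Hp Hf rest. induction rest as [|b t IH]; intros a HS HF Hin.
  - simpl. pose proof (Forall_inv HF) as Ha.
    assert (p <= a) by (destruct Hin as [[->|[]]|]; lra).
    replace (first + 1 - a) with ((first + 1) - a) by ring.
    apply arc_bound with k; auto; lra.
  - simpl. destruct (StronglySorted_inv HS) as [HS' H3].
    pose proof (Forall_inv H3) as Hab0.
    pose proof (Forall_inv HF) as Ha. pose proof (Forall_inv_tail HF) as HF'.
    pose proof (Forall_inv HF') as Hb0.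
    assert (Hb : p <= a \/ In p (b :: t)) by (destruct Hin as [[->|]|]; auto; lra).
    assert (IHb : rc_chain b t first y <= Psi p (first + 1) - Psi p b).
    { apply IH; auto. destruct Hb; auto. right; simpl in Hab0; lra. }
    assert (Hab : (b - a) * cdist ((a + b) / 2) y <= Psi p b - Psi p a).
    { simpl in Hab0. apply arc_bound with k; auto. destruct Hb as [Hb|Hb].
      - right; lra.
      - left. assert (b <= p).
        { destruct Hb as [->|Hb]. lra.
          destruct (StronglySorted_inv HS') as [_ Hbt].
          rewrite Forall_forall in Hbt. apply Hbt in Hb. auto. }
        lra. }
    lra.
Qed.

Lemma rc_le (s : list R) (y : R) :
  StronglySorted Rle s -> Forall (fun z => 0 <= z < 1) s -> In (antipode y) s ->
  rc_cost_sorted s y <= 1/4.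
Proof.
  intros HS HF Hin. destruct s as [|a t]; [destruct Hin|].
  set (p := antipode y) in *.
  destruct (frac_dec (y + 1/2)) as [Hp Hk].
  assert (Hy : y = p - 1/2 + IZR (Int_part (y + 1/2))) by (unfold p, antipode; lra).
  assert (Ha : a <= p).
  { destruct Hin as [->|Hin]. lra. inversion HS; subst.
    rewrite Forall_forall in H2. auto. }
  inversion HF; subst.
  simpl. eapply Rle_trans.
  apply (chain_bound p y a _ Hy); auto; try (unfold p, antipode; lra).
  rewrite Psi_hi by lra. rewrite Psi_lo by lra. unfold Phi.
  replace (a + 1 - (p + 1/2)) with (a - (p - 1/2)) by lra. lra.
Qed.

Lemma lrm_ge (l L y : R) : 0 <= L <= 1/2 -> frac_part (y + 1/2 - l) <= L ->
  1/4 <= lrm_cost l L y.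
Proof.
  intros HL Ht.
  destruct (frac_dec (y + 1/2 - l)) as [H1 H2].
  set (t := frac_part (y + 1/2 - l)) in *.
  set (k := Int_part (y + 1/2 - l)) in *.
  assert (D : forall w, 0 <= w <= L -> cdist (l + w) y = 1/2 - Rabs (w - t)).
  { intros w Hw. destruct (Rle_dec t w).
    - rewrite (cdist_val _ _ (w - t - 1/2) (1 - k)) by (try rewrite minus_IZR; lra).
      rewrite Rabs_left1 by lra. rewrite Rabs_right by lra. lra.
    - rewrite (cdist_val _ _ (w - t + 1/2) (- k)) by (try rewrite opp_IZR; lra).
      rewrite Rabs_right by lra. rewrite Rabs_left by lra. lra. }
  unfold lrm_cost.
  pose proof (D 0 ltac:(lra)) as D0. rewrite Rplus_0_r in D0.
  rewrite D0, (D L ltac:(lra)), (D (L/2) ltac:(lra)).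
  destruct (Rle_dec 0 (0 - t)); destruct (Rle_dec 0 (L - t)); destruct (Rle_dec 0 (L/2 - t));
  repeat first [rewrite (Rabs_right (0 - t)) by lra | rewrite (Rabs_left (0 - t)) by lra
               | rewrite (Rabs_right (L - t)) by lra | rewrite (Rabs_left (L - t)) by lra
               | rewrite (Rabs_right (L/2 - t)) by lra | rewrite (Rabs_left (L/2 - t)) by lra];
  lra.
Qed.

Lemma upd_length (x : list R) i v : (i < length x)%nat -> length (upd x i v) = length x.
Proof.
  revert i; induction x as [|a x IH]; intros [|i] H; simpl in H; try lia.
  - reflexivity.
  - change (upd (a :: x) (S i) v) with (a :: upd x i v). simpl. rewrite IH by lia. reflexivity.
Qed.

Lemma upd_nth (x : list R) i j v : (i < length x)%nat -> j <> i -> nth j (upd x i v) 0 = nth j x 0.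
Proof.
  revert i j; induction x as [|a x IH]; intros i j Hi H; simpl in Hi; [lia|].
  destruct i as [|i].
  - destruct j as [|j]; [lia|]. reflexivity.
  - change (upd (a :: x) (S i) v) with (a :: upd x i v).
    destruct j as [|j]; [reflexivity|]. simpl. apply IH; lia.
Qed.

Lemma in_x (x : list R) i v z : (i < length x)%nat -> In z x ->
  z = nth i x 0 \/ In z (upd x i v).
Proof.
  intros Hi Hz. destruct (In_nth x z 0 Hz) as [j [Hj <-]].
  destruct (Nat.eq_dec j i) as [->|Hne]; [left; reflexivity|right].
  rewrite <- (upd_nth x i j v Hi Hne). apply nth_In. rewrite upd_length; auto.
Qed.

Theorem mainTheorem14 (x : list R) (i : nat) (xi' : R) :
  (i < length x)%nat ->
  ~ on_one_semicircle x ->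
  on_one_semicircle (upd x i xi') ->
  forall s : list R, sorted_antipodes x s ->
  forall l L : R, is_min_arc (upd x i xi') l L ->
  rc_cost_sorted s (nth i x 0) <= lrm_cost l L (nth i x 0).
Proof.
  intros Hi Hnot [l0 Hl0] s [HS HP] l L [HL0 [HLF HLmin]].
  set (y := nth i x 0).
  assert (HL2 : L <= 1/2) by (apply (HLmin l0); auto; lra).
  eapply Rle_trans; [apply rc_le|].
  - apply Sorted_StronglySorted; auto. intros a b c; lra.
  - rewrite Forall_forall. intros z Hz.
    apply (Permutation_in _ HP) in Hz. apply in_map_iff in Hz.
    destruct Hz as [w [<- _]]. unfold antipode. destruct (frac_dec (w + 1/2)); lra.
  - apply (Permutation_in _ (Permutation_sym HP)). apply in_map. apply nth_In; auto.
  - apply lrm_ge; [lra|].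
    destruct (Rle_dec (frac_part (y + 1/2 - l)) L) as [|Hgt]; auto.
    exfalso. apply Hnot.
    rewrite Forall_forall in HLF.
    destruct (frac_dec (y - l)) as [Hu Hku].
    set (u := frac_part (y - l)) in *.
    destruct (Rle_dec u (1/2)).
    + exists l. rewrite Forall_forall. intros z Hz.
      destruct (in_x x i xi' z Hi Hz) as [->|Hz'].
      * unfold in_arc. fold y. fold u. lra.
      * apply HLF in Hz'. unfold in_arc in *. lra.
    + exists y. rewrite Forall_forall. intros z Hz.
      destruct (in_x x i xi' z Hi Hz) as [->|Hz'].
      * unfold in_arc. fold y. rewrite (frac_eq (y - y) 0 0); simpl; lra.
      * apply HLF in Hz'. unfold in_arc in *.
        destruct (frac_dec (z - l)) as [Hw Hkw].
        set (w := frac_part (z - l)) in *.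
        assert (E : frac_part (y + 1/2 - l) = u - 1/2).
        { apply (frac_eq _ _ (Int_part (y - l) + 1)). lra. rewrite plus_IZR; lra. }
        rewrite (frac_eq (z - y) (w - u + 1) (Int_part (z - l) - Int_part (y - l) - 1)).
        -- lra.
        -- lra.
        -- rewrite !minus_IZR. lra.
Qed.
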